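(* Let $\mathcal V$ be braided monoidal closed and complete, and let $A$ be a semi-Hopf $\mathcal V$-category with object set $X$ whose underlying $\mathcal V$-category is Frobenius. Then $\int^\ell_{A,x}\cong I$ in $\mathcal V$ for all $x\in X$. More precisely, if $(e,\nu)$ is a Frobenius system, the morphism $u_x\colon I\to\int^\ell_{A,x}$ induced by the left integral family $t^{yx}=(1\otimes\epsilon_{xy})\circ e^{yx}$ is an isomorphism with inverse $\nu_x\circ\tau_{xx}$.
   Context: $\mathcal V$: braided monoidal closed with all limits, tensor $\otimes$, unit $I$, braiding $\sigma$. A $\mathcal V$-category $A$ with object set $X$: objects $A_{x,y}$, compositions $m_{xyz}\colon A_{x,y}\otimes A_{y,z}\to A_{x,z}$, units $j_x\colon I\to A_{x,x}$, associative and unital. Semi-Hopf: each $A_{x,y}$ is a comonoid $(\delta_{xy},\epsilon_{xy})$ in $\mathcal V$ with all $m_{xyz},j_x$ comonoid morphisms. Casimir family: morphisms $e^{xy}\colon I\to A_{x,y}\otimes A_{y,x}$ with $(m_{zxy}\otimes1)\circ(1_{A_{z,x}}\otimes e^{xy})=(1\otimes m_{yzx})\circ(e^{zy}\otimes1_{A_{z,x}})$ for all $x,y,z$. A Frobenius system is a Casimir family $e$ together with morphisms $\nu_x\colon A_{x,x}\to I$ ($x\in X$) such that $(\nu_x\otimes1)\circ e^{xx}=j_x=(1\otimes\nu_x)\circ e^{xx}$. A $\mathcal V$-category is Frobenius if it admits a Frobenius system. Left integral space: for $z\in X$, $\int^\ell_{A,z}$ is the object with morphisms $\tau_{yz}\colon\int^\ell_{A,z}\to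 A_{y,z}$ ($y\in X$) satisfying $m_{xyz}\circ(1_{A_{x,y}}\otimes\tau_{yz})=\epsilon_{xy}\otimes\tau_{xz}$ for all $x,y$, universal among objects $W$ with families $w_y\colon W\to A_{y,z}$ satisfying the same equations (unique factorization). Morphisms $I\to\int^\ell_{A,z}$ thus correspond to families $t^{yz}\colon I\to A_{y,z}$ with $m_{xyz}\circ(1\otimes t^{yz})=t^{xz}\circ\epsilon_{xy}$. *)

(* Defs.v *)
From Stdlib Require Import Logic.

Record BraidedMonCat := {
  ob : Type;
  hom : ob -> ob -> Type;
  idm : forall a, hom a a;
  comp : forall {a b c}, hom b c -> hom a b -> hom a c;
  comp_assoc : forall a b c d (f : hom a b) (g : hom b c) (h : hom c d),
      comp h (comp g f) = comp (comp h g) f;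
  comp_id_l : forall a b (f : hom a b), comp (idm b) f = f;
  comp_id_r : forall a b (f : hom a b), comp f (idm a) = f;

  tens : ob -> ob -> ob;
  tensm : forall {a a' b b'}, hom a a' -> hom b b' -> hom (tens a b) (tens a' b');
  tens_id : forall a b, tensm (idm a) (idm b) = idm (tens a b);
  tens_comp : forall a a' a'' b b' b''
      (f : hom a a') (f' : hom a' a'') (g : hom b b') (g' : hom b' b''),
      tensm (comp f' f) (comp g' g) = comp (tensm f' g') (tensm f g);

  unit : ob;

  assoc : forall a b c, hom (tens (tens a b) c) (tens a (tens b c));
  assoc_inv : forall a b c, hom (tens a (tens b c)) (tens (tens a b) c);
  assoc_iso1 : forall a b c, comp (assoc_inv a b c) (assoc a b c) = idm _;
  assoc_iso2 : forall a b c, comp (assoc a b c) (assoc_inv a b c) = idm _;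
  assoc_nat : forall a a' b b' c c' (f : hom a a') (g : hom b b') (h : hom c c'),
      comp (assoc a' b' c') (tensm (tensm f g) h)
      = comp (tensm f (tensm g h)) (assoc a b c);

  lunit : forall a, hom (tens unit a) a;
  lunit_inv : forall a, hom a (tens unit a);
  lunit_iso1 : forall a, comp (lunit_inv a) (lunit a) = idm _;
  lunit_iso2 : forall a, comp (lunit a) (lunit_inv a) = idm _;
  lunit_nat : forall a b (f : hom a b),
      comp f (lunit a) = comp (lunit b) (tensm (idm unit) f);

  runit : forall a, hom (tens a unit) a;
  runit_inv : forall a, hom a (tens a unit);
  runit_iso1 : forall a, comp (runit_inv a) (runit a) = idm _;
  runit_iso2 : forall a, comp (runit a) (runit_inv a) = idm _;
  runit_nat : forall a b (f : hom a b),
      comp f (runit a) = comp (runit b) (tensm f (idm unit));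

  pentagon : forall a b c d,
      comp (assoc a b (tens c d)) (assoc (tens a b) c d)
      = comp (tensm (idm a) (assoc b c d))
             (comp (assoc a (tens b c) d) (tensm (assoc a b c) (idm d)));
  triangle : forall a b,
      comp (tensm (idm a) (lunit b)) (assoc a unit b)
      = tensm (runit a) (idm b);

  braid : forall a b, hom (tens a b) (tens b a);
  braid_inv : forall a b, hom (tens b a) (tens a b);
  braid_iso1 : forall a b, comp (braid_inv a b) (braid a b) = idm _;
  braid_iso2 : forall a b, comp (braid a b) (braid_inv a b) = idm _;
  braid_nat : forall a a' b b' (f : hom a a') (g : hom b b'),
      comp (braid a' b') (tensm f g) = comp (tensm g f) (braid a b);
  hexagon1 : forall a b c,
      comp (assoc b c a) (comp (braid a (tens b c)) (assoc a b c))
      = comp (tensm (idm b) (braid a c))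
             (comp (assoc b a c) (tensm (braid a b) (idm c)));
  hexagon2 : forall a b c,
      comp (assoc_inv c a b) (comp (braid (tens a b) c) (assoc_inv a b c))
      = comp (tensm (braid a c) (idm b))
             (comp (assoc_inv a c b) (tensm (idm a) (braid b c)))
}.

Arguments ob : clear implicits.
Arguments hom {_} _ _.
Arguments idm {_} _.
Arguments comp {_ _ _ _} _ _.
Arguments tens {_} _ _.
Arguments tensm {_ _ _ _ _} _ _.
Arguments unit {_}.
Arguments assoc {_} _ _ _.
Arguments assoc_inv {_} _ _ _.
Arguments lunit {_} _.
Arguments lunit_inv {_} _.
Arguments runit {_} _.
Arguments runit_inv {_} _.
Arguments braid {_} _ _.
Arguments braid_inv {_} _ _.

Declare Scope cat_scope.
Delimit Scope cat_scope with cat.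
Open Scope cat_scope.
Notation "g ∘ f" := (comp g f) (at level 40, left associativity) : cat_scope.
Notation "a ⊗ b" := (tens a b) (at level 30, right associativity) : cat_scope.
Notation "f ⊠ g" := (tensm f g) (at level 30, right associativity) : cat_scope.
Notation "1_ a" := (idm a) (at level 9) : cat_scope.

(* Closedness: every functor (- ⊗ a) has a right adjoint [a, -]. *)
Definition is_closed (V : BraidedMonCat) : Prop :=
  forall a b : ob V, exists (h : ob V) (ev : hom (h ⊗ a) b),
    forall (c : ob V) (f : hom (c ⊗ a) b),
      exists! g : hom c h, ev ∘ (g ⊠ 1_ a) = f.

(* Completeness: all (small) products and all equalizers, hence all
   small limits. *)
Definition has_products (V : BraidedMonCat) : Prop :=
  forall (I : Type) (F : I -> ob V),
    exists (P : ob V) (p : forall i, hom P (F i)),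
      forall (c : ob V) (f : forall i, hom c (F i)),
        exists! g : hom c P, forall i, p i ∘ g = f i.

Definition has_equalizers (V : BraidedMonCat) : Prop :=
  forall (a b : ob V) (f g : hom a b),
    exists (E : ob V) (e : hom E a), f ∘ e = g ∘ e /\
      forall (c : ob V) (h : hom c a), f ∘ h = g ∘ h ->
        exists! k : hom c E, e ∘ k = h.

Definition is_complete (V : BraidedMonCat) : Prop :=
  has_products V /\ has_equalizers V.

Definition interchange {V : BraidedMonCat} (a b c d : ob V)
  : hom ((a ⊗ b) ⊗ (c ⊗ d)) ((a ⊗ c) ⊗ (b ⊗ d)) :=
  assoc_inv a c (b ⊗ d)
  ∘ (1_ a ⊠ assoc c b d)
  ∘ (1_ a ⊠ (braid b c ⊠ 1_ d))
  ∘ (1_ a ⊠ assoc_inv b c d)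
  ∘ assoc a b (c ⊗ d).

Record VCat (V : BraidedMonCat) := {
  vobj : Type;
  vhom : vobj -> vobj -> ob V;
  vcomp : forall x y z, hom (vhom x y ⊗ vhom y z) (vhom x z);
  vunit : forall x, hom unit (vhom x x);
  vcomp_assoc : forall x y z w,
      vcomp x z w ∘ (vcomp x y z ⊠ 1_ (vhom z w))
      = vcomp x y w ∘ (1_ (vhom x y) ⊠ vcomp y z w)
        ∘ assoc (vhom x y) (vhom y z) (vhom z w);
  vcomp_unit_l : forall x y,
      vcomp x x y ∘ (vunit x ⊠ 1_ (vhom x y)) = lunit (vhom x y);
  vcomp_unit_r : forall x y,
      vcomp x y y ∘ (1_ (vhom x y) ⊠ vunit y) = runit (vhom x y)
}.
Arguments vobj {V} _.
Arguments vhom {V} _ _ _.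
Arguments vcomp {V} _ _ _ _.
Arguments vunit {V} _ _.

(* Semi-Hopf V-categories: each A_{x,y} a comonoid, with composition and
   units comonoid morphisms (I ⊗ I and A ⊗ B carry the usual comonoid
   structures, the latter using the braiding). *)
Record SemiHopfVCat (V : BraidedMonCat) := {
  sh_cat :> VCat V;
  cmul : forall x y, hom (vhom sh_cat x y) (vhom sh_cat x y ⊗ vhom sh_cat x y);
  cunit : forall x y, hom (vhom sh_cat x y) unit;
  cmul_coassoc : forall x y,
      assoc _ _ _ ∘ (cmul x y ⊠ 1_ _) ∘ cmul x y
      = (1_ _ ⊠ cmul x y) ∘ cmul x y;
  cmul_counit_l : forall x y,
      lunit _ ∘ (cunit x y ⊠ 1_ _) ∘ cmul x y = 1_ _;
  cmul_counit_r : forall x y,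
      runit _ ∘ (1_ _ ⊠ cunit x y) ∘ cmul x y = 1_ _;
  vcomp_cmul : forall x y z,
      cmul x z ∘ vcomp sh_cat x y z
      = (vcomp sh_cat x y z ⊠ vcomp sh_cat x y z)
        ∘ interchange _ _ _ _
        ∘ (cmul x y ⊠ cmul y z);
  vcomp_cunit : forall x y z,
      cunit x z ∘ vcomp sh_cat x y z = lunit unit ∘ (cunit x y ⊠ cunit y z);
  vunit_cmul : forall x,
      cmul x x ∘ vunit sh_cat x = (vunit sh_cat x ⊠ vunit sh_cat x) ∘ lunit_inv unit;
  vunit_cunit : forall x,
      cunit x x ∘ vunit sh_cat x = 1_ unit
}.
Arguments sh_cat {V} _.
Arguments cmul {V} _ _ _.
Arguments cunit {V} _ _ _.

Section Frob.
Context {V : BraidedMonCat} (A : VCat V).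
Local Notation X := (vobj A).
Local Notation "A[ x , y ]" := (vhom A x y).
Local Notation m := (vcomp A).
Local Notation j := (vunit A).

Definition is_casimir (e : forall x y, hom unit (A[x,y] ⊗ A[y,x])) : Prop :=
  forall x y z,
    (m z x y ⊠ 1_ A[y,x]) ∘ assoc_inv A[z,x] A[x,y] A[y,x]
      ∘ (1_ A[z,x] ⊠ e x y) ∘ runit_inv A[z,x]
    = (1_ A[z,y] ⊠ m y z x) ∘ assoc A[z,y] A[y,z] A[z,x]
      ∘ (e z y ⊠ 1_ A[z,x]) ∘ lunit_inv A[z,x].

Definition is_frobenius_system (e : forall x y, hom unit (A[x,y] ⊗ A[y,x]))
  (nu : forall x, hom A[x,x] unit) : Prop :=
  is_casimir e /\
  forall x, lunit A[x,x] ∘ (nu x ⊠ 1_ A[x,x]) ∘ e x x = j x /\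
            runit A[x,x] ∘ (1_ A[x,x] ⊠ nu x) ∘ e x x = j x.

Definition is_frobenius : Prop :=
  exists e nu, is_frobenius_system e nu.
End Frob.

Section Integrals.
Context {V : BraidedMonCat} (A : SemiHopfVCat V).
Local Notation "A[ x , y ]" := (vhom A x y).
Local Notation m := (vcomp A).

Definition left_integral_family (z : vobj A) (W : ob V)
  (w : forall y, hom W A[y,z]) : Prop :=
  forall x y, m x y z ∘ (1_ A[x,y] ⊠ w y) = lunit A[x,z] ∘ (cunit A x y ⊠ w x).

Definition is_left_integral_space (z : vobj A) (Int : ob V)
  (tau : forall y, hom Int A[y,z]) : Prop :=
  left_integral_family z Int tau /\
  forall (W : ob V) (w : forall y, hom W A[y,z]),
    left_integral_family z W w ->
    exists! g : hom W Int, forall y, tau y ∘ g = w y.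

Definition integral_from_casimir (e : forall x y, hom unit (A[x,y] ⊗ A[y,x]))
  (x y : vobj A) : hom unit A[y,x] :=
  runit A[y,x] ∘ (1_ A[y,x] ⊠ cunit A x y) ∘ e y x.
End Integrals.

Definition is_iso {V : BraidedMonCat} {a b : ob V} (f : hom a b) (g : hom b a) : Prop :=
  g ∘ f = 1_ a /\ f ∘ g = 1_ b.

(* Main.v *)
Require Import Defs.

Lemma cancel_left {V : BraidedMonCat} {a b c : ob V} (i : hom b c) (j : hom c b) :
  j ∘ i = 1_ b -> forall f g : hom a b, i ∘ f = i ∘ g -> f = g.
Proof.
  intros H f g E. rewrite <- (comp_id_l _ _ _ f), <- (comp_id_l _ _ _ g), <- H,
   <- !comp_assoc, E. reflexivity.
Qed.

Lemma cancel_right {V : BraidedMonCat} {a b c : ob V} (i : hom a b) (j : hom b a) :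
  i ∘ j = 1_ b -> forall f g : hom b c, f ∘ i = g ∘ i -> f = g.
Proof.
  intros H f g E. rewrite <- (comp_id_r _ _ _ f), <- (comp_id_r _ _ _ g), <- H,
   !comp_assoc, E. reflexivity.
Qed.

Lemma tc {V : BraidedMonCat} {a a' a'' b b' b'' : ob V}
  (f : hom a a') (f' : hom a' a'') (g : hom b b') (g' : hom b' b'') :
  (f' ⊠ g') ∘ (f ⊠ g) = (f' ∘ f) ⊠ (g' ∘ g).
Proof. symmetry. apply tens_comp. Qed.

Lemma tck {V : BraidedMonCat} {a a' a'' b b' b'' d : ob V}
  (f : hom a a') (f' : hom a' a'') (g : hom b b') (g' : hom b' b'') (k : hom (a'' ⊗ b'') d) :
  k ∘ (f' ⊠ g') ∘ (f ⊠ g) = k ∘ ((f' ∘ f) ⊠ (g' ∘ g)).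
Proof. rewrite <- comp_assoc, tc. reflexivity. Qed.

Lemma cancel_r1 {V : BraidedMonCat} {a b : ob V} (f g : hom a b) :
  f ⊠ 1_ unit = g ⊠ 1_ unit -> f = g.
Proof.
  intro E.
  apply (cancel_right (runit a) (runit_inv a) (runit_iso2 V a)).
  rewrite !runit_nat, E. reflexivity.
Qed.

Lemma cancel_l1 {V : BraidedMonCat} {a b : ob V} (f g : hom a b) :
  1_ unit ⊠ f = 1_ unit ⊠ g -> f = g.
Proof.
  intro E.
  apply (cancel_right (lunit a) (lunit_inv a) (lunit_iso2 V a)).
  rewrite !lunit_nat, E. reflexivity.
Qed.

Lemma K2 {V : BraidedMonCat} (a b : ob V) :
  runit (a ⊗ b) = (1_ a ⊠ runit b) ∘ assoc a b unit.
Proof.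
  apply cancel_r1.
  apply (cancel_left (assoc a b unit) (assoc_inv a b unit) (assoc_iso1 V a b unit)).
  rewrite <- triangle, <- tens_id, comp_assoc, assoc_nat, <- comp_assoc, pentagon.
  rewrite !comp_assoc, tc, comp_id_l, triangle.
  transitivity (assoc a b unit ∘ ((1_ a ⊠ runit b) ⊠ 1_ unit) ∘ (assoc a b unit ⊠ 1_ unit)).
  - rewrite assoc_nat. reflexivity.
  - rewrite <- comp_assoc, tc, comp_id_l. reflexivity.
Qed.

Lemma runit_II {V : BraidedMonCat} : runit (@unit V ⊗ unit) = runit unit ⊠ 1_ unit.
Proof.
  apply (cancel_left (runit unit) (runit_inv unit) (runit_iso1 V unit)).
  apply runit_nat.
Qed.

Lemma K1 {V : BraidedMonCat} : lunit (@unit V) = runit unit.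
Proof.
  apply cancel_l1.
  apply (cancel_right (assoc unit unit unit) (assoc_inv unit unit unit) (assoc_iso2 V _ _ _)).
  rewrite triangle, <- K2, runit_II. reflexivity.
Qed.

Lemma ctx {V : BraidedMonCat} {a b c d : ob V} (X : hom b c) (Y : hom a b) (Z : hom a c) (k : hom c d) :
  X ∘ Y = Z -> k ∘ X ∘ Y = k ∘ Z.
Proof. intro H. rewrite <- comp_assoc, H. reflexivity. Qed.

Ltac nrm := repeat rewrite comp_assoc.
Tactic Notation "rw2" uconstr(L) := first [ rewrite (ctx _ _ _ _ L) | rewrite L ]; nrm.
Tactic Notation "rw2" "<-" uconstr(L) := first [ rewrite (ctx _ _ _ _ (eq_sym L)) | rewrite <- L ]; nrm.
Lemma ainv_nat {V : BraidedMonCat} {a a' b b' c c' : ob V} (f : hom a a') (g : hom b b') (h : hom c c') :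
  assoc_inv a' b' c' ∘ (f ⊠ (g ⊠ h)) = ((f ⊠ g) ⊠ h) ∘ assoc_inv a b c.
Proof.
  apply (cancel_left (assoc a' b' c') (assoc_inv a' b' c') (assoc_iso1 V _ _ _)).
  rewrite comp_assoc, assoc_iso2, comp_id_l, comp_assoc, assoc_nat, <- comp_assoc, assoc_iso2, comp_id_r.
  reflexivity.
Qed.

Lemma K2' {V : BraidedMonCat} (a b : ob V) :
  1_ a ⊠ runit b = runit (a ⊗ b) ∘ assoc_inv a b unit.
Proof. rewrite K2, <- comp_assoc, assoc_iso2, comp_id_r. reflexivity. Qed.

Lemma xch {V : BraidedMonCat} {a a' b b' : ob V} (f : hom a a') (g : hom b b') :
  (f ⊠ 1_ b') ∘ (1_ a ⊠ g) = (1_ a' ⊠ g) ∘ (f ⊠ 1_ b).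
Proof. rewrite !tc, !comp_id_l, !comp_id_r. reflexivity. Qed.

Lemma splitL {V : BraidedMonCat} {a a' b b' : ob V} (f : hom a a') (g : hom b b') :
  f ⊠ g = (f ⊠ 1_ b') ∘ (1_ a ⊠ g).
Proof. rewrite tc, comp_id_l, comp_id_r. reflexivity. Qed.

Lemma splitR {V : BraidedMonCat} {a a' b b' : ob V} (f : hom a a') (g : hom b b') :
  f ⊠ g = (1_ a' ⊠ g) ∘ (f ⊠ 1_ b).
Proof. rewrite tc, comp_id_l, comp_id_r. reflexivity. Qed.

Lemma tid_l {V : BraidedMonCat} {a b c d : ob V} (f : hom b c) (g : hom c d) :
  1_ a ⊠ (g ∘ f) = (1_ a ⊠ g) ∘ (1_ a ⊠ f).
Proof. rewrite tc, comp_id_l. reflexivity. Qed.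

Lemma rnat {V : BraidedMonCat} {a b : ob V} (f : hom a b) : runit b ∘ (f ⊠ 1_ unit) = f ∘ runit a.
Proof. symmetry; apply runit_nat. Qed.
Lemma lnat {V : BraidedMonCat} {a b : ob V} (f : hom a b) : lunit b ∘ (1_ unit ⊠ f) = f ∘ lunit a.
Proof. symmetry; apply lunit_nat. Qed.

Lemma t_integral {V : BraidedMonCat} (A : SemiHopfVCat V)
  (e : forall x y, hom unit (vhom A x y ⊗ vhom A y x)) :
  is_casimir A e -> forall x, left_integral_family A x unit (integral_from_casimir A e x).
Proof.
  intros hc x w y. unfold integral_from_casimir.
  pose proof (hc y x w) as C.
  apply (cancel_right (runit_inv (vhom A w y)) (runit (vhom A w y)) (runit_iso1 V _)).
  transitivity (runit _ ∘ (1_ _ ⊠ cunit A x y) ∘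
      ((vcomp A w y x ⊠ 1_ (vhom A x y)) ∘ assoc_inv _ _ _ ∘ (1_ _ ⊠ e y x) ∘ runit_inv _)).
  - nrm. f_equal.
    rw2 <- (xch _ _). rw2 (rnat _). nrm. rewrite <- tens_id. rw2 <- (ainv_nat _ _ _). nrm. rw2 <- (K2' _ _).
    rewrite !tck, !comp_id_l. nrm. reflexivity.
  - rewrite C. nrm.
    rewrite tck, comp_id_l, vcomp_cunit, tid_l. nrm.
    rw2 <- (assoc_nat _ _ _ _ _ _ _ _ _ _). rw2 (triangle _ _ _). rewrite !tck, !comp_id_r, !comp_id_l. nrm.
    set (t := runit (vhom A w x) ∘ 1_ (vhom A w x) ⊠ cunit A x w ∘ e w x).
    rewrite (splitL t), (splitR (cunit A w y) t). nrm. rw2 (rnat _). rw2 (lnat _). rewrite <- K1.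
    rw2 (lnat _). rewrite K1. rw2 (rnat _). rewrite <- !comp_assoc, lunit_iso2, runit_iso2.
    reflexivity.
Qed.

Lemma linv_nat {V : BraidedMonCat} {a b : ob V} (f : hom a b) :
  lunit_inv b ∘ f = (1_ unit ⊠ f) ∘ lunit_inv a.
Proof.
  apply (cancel_left (lunit b) (lunit_inv b) (lunit_iso1 V b)).
  rewrite comp_assoc, lunit_iso2, comp_id_l, comp_assoc, lnat, <- comp_assoc, lunit_iso2, comp_id_r.
  reflexivity.
Qed.

Lemma nu_t {V : BraidedMonCat} (A : SemiHopfVCat V)
  (e : forall x y, hom unit (vhom A x y ⊗ vhom A y x)) (nu : forall x, hom (vhom A x x) unit) :
  is_frobenius_system A e nu -> forall x, nu x ∘ integral_from_casimir A e x x = 1_ unit.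
Proof.
  intros [hc hf] x. unfold integral_from_casimir.
  rewrite <- (vunit_cunit V A x), <- (proj1 (hf x)). nrm.
  rw2 (runit_nat _ _ _ (nu x)). rw2 (lunit_nat _ _ _ (cunit A x x)).
  rewrite !tck, !comp_id_l, !comp_id_r, K1. reflexivity.
Qed.

Lemma tau_t {V : BraidedMonCat} (A : SemiHopfVCat V)
  (e : forall x y, hom unit (vhom A x y ⊗ vhom A y x)) (nu : forall x, hom (vhom A x x) unit) :
  is_frobenius_system A e nu -> forall x (W : ob V) (T : forall y, hom W (vhom A y x)),
  left_integral_family A x W T ->
  forall y, T y = integral_from_casimir A e x y ∘ nu x ∘ T x.
Proof.
  intros [hc hf] x W T HT y. unfold integral_from_casimir.
  transitivity (vcomp A y x x ∘ (1_ _ ⊠ vunit A x) ∘ runit_inv _ ∘ T y).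
  { rewrite vcomp_unit_r, runit_iso2, comp_id_l. reflexivity. }
  rewrite <- (proj2 (hf x)), !tid_l. nrm. rewrite K2'. nrm.
  rw2 (ainv_nat _ _ _). rewrite tens_id. rw2 (runit_nat _ _ _ _). rw2 (xch _ _).
  pose proof (hc x x y) as C.
  assert (C' : forall d (k : hom _ d), k ∘ (vcomp A y x x ⊠ 1_ (vhom A x x))
     ∘ assoc_inv (vhom A y x) (vhom A x x) (vhom A x x)
     ∘ 1_ (vhom A y x) ⊠ e x x ∘ runit_inv (vhom A y x) =
     k ∘ (1_ (vhom A y x) ⊠ vcomp A x y x
     ∘ assoc (vhom A y x) (vhom A x y) (vhom A y x) ∘ e y x ⊠ 1_ (vhom A y x)
     ∘ lunit_inv (vhom A y x))).
  { intros d k. rewrite <- C. nrm. reflexivity. }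
  rewrite C'. nrm. clear C' C.
  rw2 (linv_nat (T y)). rw2 (xch _ _). rewrite <- tens_id.
  rw2 (assoc_nat _ _ _ _ _ _ _ _ _ _). rewrite !tck, !comp_id_l. nrm.
  rw2 (HT x y). rewrite (lunit_nat _ _ _ (nu x)). nrm. rewrite tck, comp_id_l, tid_l. nrm.
  rw2 <- (assoc_nat _ _ _ _ _ _ _ _ _ _). rw2 (triangle _ _ _).
  rewrite !tck, !comp_id_l, !comp_id_r. nrm.
  set (t := runit (vhom A y x) ∘ 1_ (vhom A y x) ⊠ cunit A x y ∘ e y x).
  rewrite (splitL t). nrm. rw2 (rnat t). rewrite <- K1. rw2 (lnat _).
  rewrite <- !comp_assoc, lunit_iso2, comp_id_r. nrm. reflexivity.
Qed.

Theorem mainTheorem5 :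
  forall (V : BraidedMonCat), is_closed V -> is_complete V ->
  forall (A : SemiHopfVCat V)
         (e : forall x y, hom unit (vhom A x y ⊗ vhom A y x))
         (nu : forall x, hom (vhom A x x) unit),
  is_frobenius_system A e nu ->
  forall (Int : vobj A -> ob V) (tau : forall z y, hom (Int z) (vhom A y z)),
  (forall z, is_left_integral_space A z (Int z) (tau z)) ->
  forall x : vobj A,
    (exists u : hom unit (Int x),
        forall y, tau x y ∘ u = integral_from_casimir A e x y) /\
    (forall u : hom unit (Int x),
        (forall y, tau x y ∘ u = integral_from_casimir A e x y) ->
        is_iso u (nu x ∘ tau x x)).
Proof.
  intros V _ _ A e nu Hf Int tau HI x.
  split.
  - destruct (proj2 (HI x) unit (integral_from_casimir A e x)
      (t_integral A e (proj1 Hf) x)) as [u [Hu _]].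
    exists u. exact Hu.
  - intros u Hu. split.
    + rewrite <- comp_assoc, Hu. apply (nu_t A e nu Hf).
    + destruct (proj2 (HI x) (Int x) (tau x) (proj1 (HI x))) as [g [_ Hg]].
      transitivity g; [symmetry|]; apply Hg; intro y.
      * rewrite !comp_assoc, Hu. symmetry. apply (tau_t A e nu Hf x (Int x) (tau x) (proj1 (HI x))).
      * apply comp_id_r.
Qed.
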